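(* For every $n\ge3$ and $d=\binom n2$ there is a $d$-dimensional $0/1$-polytope in $\mathbb{R}^d$ that is $3$-neighborly (every three distinct vertices span a triangular face) and has more than $2^{\sqrt{2d}-1/2}$ vertices.
   Context: A $0/1$-polytope is the convex hull of a subset of $\{0,1\}^d$. *)

(* Defs.v *)
From HB Require Import structures.
From mathcomp Require Import all_boot all_order all_algebra.
From mathcomp Require Import reals exp.
Set Implicit Arguments. Unset Strict Implicit. Unset Printing Implicit Defensive.
Import Order.TTheory GRing.Theory Num.Theory.
Local Open Scope ring_scope.

Section Polytopes.
Variables (R : realType) (d : nat).

Definition dotp (x y : 'rV[R]_d) : R := \sum_(i < d) x 0 i * y 0 i.

Definition pt01 (b : {ffun 'I_d -> bool}) : 'rV[R]_d := \row_i (b i)%:R.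

Definition conv (S : seq 'rV[R]_d) (x : 'rV[R]_d) : Prop :=
  exists l : 'I_(size S) -> R,
    (forall i, 0 <= l i) /\ \sum_i l i = 1 /\
    x = \sum_i l i *: S`_i.

(* F is a face of P : F = P ∩ H for a supporting hyperplane H = {c.x = b}
   with P ⊆ {c.x <= b} (c = 0 allowed, giving P itself as a face) *)
Definition is_face (P F : 'rV[R]_d -> Prop) : Prop :=
  exists (c : 'rV[R]_d) (b : R),
    (forall x, P x -> dotp c x <= b) /\
    (forall x, F x <-> (P x /\ dotp c x = b)).

Definition is_vertex (P : 'rV[R]_d -> Prop) (p : 'rV[R]_d) : Prop :=
  is_face P (fun x => x = p).

Definition aff_dim (S : seq 'rV[R]_d) : nat :=
  \rank (\matrix_(i < size S) (S`_i - S`_0)).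

Definition pts01 (V : {set {ffun 'I_d -> bool}}) : seq 'rV[R]_d :=
  map pt01 (enum V).

Definition poly01 (V : {set {ffun 'I_d -> bool}}) : 'rV[R]_d -> Prop :=
  conv (pts01 V).

End Polytopes.

Arguments pt01 R {d} b.
Arguments pts01 R {d} V.
Arguments poly01 R {d} V.
Arguments conv {R d} S x.
Arguments is_face {R d} P F.
Arguments is_vertex {R d} P p.
Arguments aff_dim {R d} S.

(* Main.v *)
Require Import Defs.
From HB Require Import structures.
From mathcomp Require Import all_boot all_order all_algebra.
From mathcomp Require Import reals exp.
From mathcomp Require Import ring lra zify.
Import Order.TTheory GRing.Theory Num.Theory.
Local Open Scope ring_scope.


Section Gen.
Variables (R : realType) (d : nat).

Lemma dotpDl (c1 c2 x : 'rV[R]_d) : dotp (c1 + c2) x = dotp c1 x + dotp c2 x.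
Proof. by rewrite /dotp -big_split; apply: eq_bigr => i _; rewrite mxE mulrDl. Qed.

Lemma dotpZl a (c x : 'rV[R]_d) : dotp (a *: c) x = a * dotp c x.
Proof. by rewrite /dotp mulr_sumr; apply: eq_bigr => i _; rewrite mxE mulrA. Qed.

Lemma dotp0l (x : 'rV[R]_d) : dotp 0 x = 0.
Proof. by rewrite /dotp big1 // => i _; rewrite mxE mul0r. Qed.

Lemma dotp_sumr m (l : 'I_m -> R) (v : 'I_m -> 'rV[R]_d) c :
  dotp c (\sum_i l i *: v i) = \sum_i l i * dotp c (v i).
Proof.
rewrite /dotp.
under eq_bigr => k _ do rewrite summxE mulr_sumr.
rewrite exchange_big /=; apply: eq_bigr => i _; rewrite mulr_sumr.
by apply: eq_bigr => k _; rewrite mxE mulrCA.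
Qed.

Lemma sum_ind m (k : nat) : \sum_(i < m) ((k == i)%:R : R) = (k < m)%:R.
Proof.
case: (ltnP k m) => hk.
  rewrite (bigD1 (Ordinal hk)) //= eqxx big1 ?addr0 // => i.
  by rewrite -val_eqE /= eq_sym => /negPf ->.
by rewrite big1 // => i _; rewrite gtn_eqF // (leq_trans (ltn_ord i) hk).
Qed.

Lemma conv_transfer (S T : seq 'rV[R]_d) (l : 'I_(size S) -> R) :
  (forall j, 0 <= l j) -> \sum_j l j = 1 ->
  (forall j, l j != 0 -> S`_j \in T) ->
  conv T (\sum_j l j *: S`_j).
Proof.
move=> l0 l1 lT.
exists (fun i : 'I_(size T) => \sum_(j < size S) ((index S`_j T == i)%:R * l j)).
split; first by move=> i; apply: sumr_ge0 => j _; apply: mulr_ge0.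
split.
  rewrite exchange_big /= -[RHS]l1; apply: eq_bigr => j _.
  rewrite -mulr_suml sum_ind.
  case: (eqVneq (l j) 0) => [->|/lT hj]; first by rewrite mulr0.
  by rewrite index_mem hj mul1r.
apply: esym; under eq_bigr => i _ do rewrite scaler_suml.
rewrite exchange_big /=; apply: eq_bigr => j _.
case: (eqVneq (l j) 0) => [->|/lT hj].
  by rewrite scale0r big1 // => i _; rewrite mulr0 scale0r.
rewrite (bigD1 (Ordinal (etrans (index_mem _ _) hj))) //= eqxx mul1r nth_index //.
rewrite big1 ?addr0 // => i hi.
have -> : (index S`_j T == i) = false.
  by apply/negbTE; move: hi; rewrite -val_eqE /= eq_sym.
by rewrite mul0r scale0r.
Qed.

Lemma face_seq (S T : seq 'rV[R]_d) (c : 'rV[R]_d) (b : R) :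
  (forall s, s \in S -> dotp c s <= b) ->
  (forall s, s \in S -> dotp c s = b -> s \in T) ->
  (forall t, t \in T -> t \in S) ->
  (forall t, t \in T -> dotp c t = b) ->
  is_face (conv S) (conv T).
Proof.
move=> hle htight hTS hTb.
exists c, b; split.
  move=> x [l [l0 [l1 ->]]]; rewrite dotp_sumr -[b]mul1r -l1 mulr_suml.
  apply: ler_sum => i _; rewrite ler_wpM2l //; apply: hle; exact: mem_nth.
move=> x; split.
  move=> [l [l0 [l1 ->]]]; split.
    apply: conv_transfer => // j _; apply: hTS; exact: mem_nth.
  rewrite dotp_sumr.
  under eq_bigr => i _ do rewrite hTb ?mem_nth //.
  by rewrite -mulr_suml l1 mul1r.
move=> [[l [l0 [l1 ->]]] hx]; apply: conv_transfer => // j lj.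
have hsum : \sum_(i < size S) l i * (b - dotp c S`_i) = 0.
  under eq_bigr => i _ do rewrite mulrBr.
  by rewrite sumrB -mulr_suml l1 mul1r -dotp_sumr hx subrr.
have key : forall i, l i * (b - dotp c S`_i) = 0.
  move=> i; apply: (psumr_eq0P _ hsum) => // k _.
  apply: mulr_ge0 => //; rewrite subr_ge0; apply: hle; exact: mem_nth.
apply: htight; first exact: mem_nth.
have := key j; move/eqP; rewrite mulf_eq0 (negbTE lj) /= subr_eq0.
by move/eqP.
Qed.

Lemma conv1 (p x : 'rV[R]_d) : conv [:: p] x <-> x = p.
Proof.
split.
  move=> [l [l0 [l1 ->]]]; move: l1; rewrite !big_ord1 /= => ->.
  by rewrite scale1r.
move=> ->; exists (fun _ => 1); split => //; split; first by rewrite big_ord1.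
by rewrite big_ord1 scale1r.
Qed.

Lemma is_face_ext (P F G : 'rV[R]_d -> Prop) :
  (forall x, F x <-> G x) -> is_face P F -> is_face P G.
Proof.
move=> hFG [c [b [h1 h2]]]; exists c, b; split => // x.
by rewrite -hFG.
Qed.

Lemma bool01 (a b : bool) : (2 * (a%:R : R) - 1) * b%:R <= a%:R.
Proof. by case: a; case: b => /=; lra. Qed.

Lemma bool01eq (a b : bool) : (2 * (a%:R : R) - 1) * b%:R = a%:R -> a = b.
Proof. by case: a; case: b => //=; lra. Qed.

Lemma vertex01 (V : {set {ffun 'I_d -> bool}}) v : v \in V ->
  is_vertex (poly01 R V) (pt01 R v).
Proof.
move=> hv.
apply: (@is_face_ext _ (conv [:: pt01 R v])); first by move=> x; exact: conv1.
set c := \row_k (2 * ((v k)%:R : R) - 1).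
have hdot : forall w, dotp c (pt01 R w) = \sum_k (2 * ((v k)%:R : R) - 1) * (w k)%:R.
  by move=> w; rewrite /dotp; apply: eq_bigr => k _; rewrite !mxE.
apply: (face_seq _ _ c (\sum_k ((v k)%:R : R))).
- move=> s /mapP [w _ ->]; rewrite hdot; apply: ler_sum => k _; exact: bool01.
- move=> s /mapP [w _ ->]; rewrite hdot => /eqP; rewrite eq_sym -subr_eq0 -sumrB => /eqP h.
  have h' := psumr_eq0P _ h.
  suff -> : w = v by rewrite mem_seq1.
  apply/ffunP => k; apply/esym/bool01eq; apply/esym/eqP; rewrite -subr_eq0.
  apply/eqP; apply: h' => // i _; rewrite subr_ge0; exact: bool01.
- by move=> t; rewrite mem_seq1 => /eqP ->; apply: map_f; rewrite mem_enum.
- move=> t; rewrite mem_seq1 => /eqP ->; rewrite hdot; apply: eq_bigr => k _.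
  by case: (v k) => /=; lra.
Qed.

End Gen.


Definition ok3 (x y z : bool) := (x == y) && (x == z).

Lemma core_bool (a1 a2 a3 b1 b2 b3 c1 c2 c3 d1 d2 d3 : bool) :
  b1 != a1 -> c2 != a2 -> d3 != a3 ->
  [|| ok3 a1 b1 c1, ok3 a2 b2 c2 | ok3 a3 b3 c3] ->
  [|| ok3 a1 b1 d1, ok3 a2 b2 d2 | ok3 a3 b3 d3] ->
  [|| ok3 a1 c1 d1, ok3 a2 c2 d2 | ok3 a3 c3 d3] ->
  [|| ok3 b1 c1 d1, ok3 b2 c2 d2 | ok3 b3 c3 d3] -> False.
Proof.
move=> /negPf h1 /negPf h2 /negPf h3.
have -> : b1 = ~~ a1 by move: h1; case: b1; case: a1.
have -> : c2 = ~~ a2 by move: h2; case: c2; case: a2.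
have -> : d3 = ~~ a3 by move: h3; case: d3; case: a3.
clear h1 h2 h3.
by case: a1; case: a2; case: a3; case: b2; case: b3;
   case: c1; case: c3; case: d1; case: d2.
Qed.

Lemma core_fun (T : finType) (i0 : T) (Y1 Y2 Y3 : T -> bool) :
  (forall i j k, [|| ok3 (Y1 i) (Y1 j) (Y1 k), ok3 (Y2 i) (Y2 j) (Y2 k)
                   | ok3 (Y3 i) (Y3 j) (Y3 k)]) ->
  [\/ forall p, Y1 p = Y1 i0, forall p, Y2 p = Y2 i0 | forall p, Y3 p = Y3 i0].
Proof.
move=> H.
have [h1|/forallPn [j1 /= hj1]] := boolP [forall p, Y1 p == Y1 i0].
  by apply: Or31 => p; apply/eqP; move/forallP: h1.
have [h2|/forallPn [j2 /= hj2]] := boolP [forall p, Y2 p == Y2 i0].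
  by apply: Or32 => p; apply/eqP; move/forallP: h2.
have [h3|/forallPn [j3 /= hj3]] := boolP [forall p, Y3 p == Y3 i0].
  by apply: Or33 => p; apply/eqP; move/forallP: h3.
exfalso; exact: (core_bool _ _ _ _ _ _ _ _ _ _ _ _ hj1 hj2 hj3 (H i0 j1 j2) (H i0 j1 j3) (H i0 j2 j3) (H j1 j2 j3)).
Qed.

Section Cut.
Variables (R : realType) (n : nat).

Definition E := [set A : {set 'I_n} | #|A| == 2%N].
Lemma cardE : 'C(n, 2) = #|E|.
Proof. by rewrite card_draws card_ord. Qed.

Definition eidx (k : 'I_('C(n, 2))) : {set 'I_n} := enum_val (cast_ord cardE k).

Lemma eidxP k : eidx k \in E.
Proof. exact: enum_valP. Qed.

Lemma eidx_inj : injective eidx.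
Proof. by move=> k1 k2 /enum_val_inj /cast_ord_inj. Qed.

Lemma eidx_pair k : exists i j, i != j /\ eidx k = [set i; j].
Proof. by have := eidxP k; rewrite inE => /cards2P. Qed.

Lemma pair_idx (i j : 'I_n) : i != j -> exists k, eidx k = [set i; j].
Proof.
move=> hij.
have hA : [set i; j] \in E by rewrite inE cards2 hij.
exists (cast_ord (esym cardE) (enum_rank_in hA [set i; j])).
by rewrite /eidx cast_ordKV enum_rankK_in.
Qed.

Definition cutb (X A : {set 'I_n}) : bool :=
  [exists p in A, p \in X] && [exists p in A, p \notin X].

Lemma ex2 (P : pred 'I_n) (i j : 'I_n) :
  [exists p in [set i; j], P p] = P i || P j.
Proof.
apply/existsP/orP.
  by case=> p /andP[]; rewrite !inE => /orP[]/eqP-> ?; [left|right].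
by case=> h; [exists i|exists j]; rewrite !inE eqxx ?orbT.
Qed.

Definition yv (X : {set 'I_n}) (i j : 'I_n) : bool := (i \in X) (+) (j \in X).

Lemma cutb2 X i j : cutb X [set i; j] = yv X i j.
Proof.
rewrite /cutb (ex2 (fun p => p \in X)) (ex2 (fun p => p \notin X)) /yv.
by case: (i \in X); case: (j \in X).
Qed.

Definition bvec (X : {set 'I_n}) : {ffun 'I_('C(n, 2)) -> bool} :=
  [ffun k => cutb X (eidx k)].

Lemma bvec_eq X Y : (forall i j, yv X i j = yv Y i j) -> bvec X = bvec Y.
Proof.
move=> h; apply/ffunP => k; rewrite !ffunE.
by have [i [j [_ ->]]] := eidx_pair k; rewrite !cutb2.
Qed.

Definition cutaff (F : {set 'I_n} -> R) :=
  exists c : 'rV[R]_('C(n, 2)), exists b : R,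
    forall X, F X = dotp c (pt01 R (bvec X)) + b.

Lemma cutaff_ext F G : (forall X, F X = G X) -> cutaff F -> cutaff G.
Proof. by move=> h [c [b hc]]; exists c, b => X; rewrite -h. Qed.

Lemma cutaff_const a : cutaff (fun _ => a).
Proof. by exists 0, a => X; rewrite dotp0l add0r. Qed.

Lemma cutaff_add F G : cutaff F -> cutaff G -> cutaff (fun X => F X + G X).
Proof.
move=> [c1 [b1 h1]] [c2 [b2 h2]]; exists (c1 + c2), (b1 + b2) => X.
by rewrite h1 h2 dotpDl; ring.
Qed.

Lemma cutaff_scale a F : cutaff F -> cutaff (fun X => a * F X).
Proof.
move=> [c [b h]]; exists (a *: c), (a * b) => X.
by rewrite h dotpZl mulrDr.
Qed.

Lemma cutaff_atom i j : cutaff (fun X => (yv X i j)%:R).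
Proof.
case: (eqVneq i j) => [<-|hij].
  by apply: cutaff_ext (cutaff_const 0) => X; rewrite /yv addbb.
have [k0 hk0] := pair_idx _ _ hij.
exists (\row_k ((k == k0)%:R)), 0 => X.
rewrite addr0 /dotp (bigD1 k0) //= big1 => [|k hk]; last by rewrite mxE (negbTE hk) mul0r.
by rewrite addr0 !mxE eqxx mul1r ffunE hk0 cutb2.
Qed.

Lemma cutaff_sum (I : finType) (F : I -> {set 'I_n} -> R) :
  (forall t, cutaff (F t)) -> cutaff (fun X => \sum_t F t X).
Proof.
move=> hF.
suff: forall r, cutaff (fun X => \sum_(t <- r) F t X) by apply.
elim=> [|t r IH].
  by apply: cutaff_ext (cutaff_const 0) => X; rewrite big_nil.
by apply: cutaff_ext (cutaff_add _ _ (hF t) IH) => X; rewrite big_cons.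
Qed.

Lemma cutaff_g (g : bool -> bool -> bool) i j k :
  cutaff (fun X => (g (yv X i j) (yv X i k))%:R).
Proof.
pose g00 : R := (g false false)%:R. pose g01 : R := (g false true)%:R.
pose g10 : R := (g true false)%:R. pose g11 : R := (g true true)%:R.
have h := cutaff_add _ _ (cutaff_add _ _ (cutaff_add _ _ (cutaff_const g00)
   (cutaff_scale (g10 - g00) _ (cutaff_atom i j)))
   (cutaff_scale (g01 - g00) _ (cutaff_atom i k)))
   (cutaff_scale (g11 - g10 - g01 + g00) _ (cutaff_scale 2^-1 _
      (cutaff_add _ _ (cutaff_add _ _ (cutaff_atom i j) (cutaff_atom i k))
          (cutaff_scale (-1) _ (cutaff_atom j k))))).
apply: cutaff_ext h => X /=.
have -> : yv X j k = yv X i j (+) yv X i k.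
  by rewrite /yv; case: (i \in X); case: (j \in X); case: (k \in X).
rewrite /g00 /g01 /g10 /g11.
case: (yv X i j); case: (yv X i k) => /=; by field.
Qed.

End Cut.

Arguments eidx {n}.
Arguments eidx_pair {n}.
Arguments eidx_inj {n}.
Arguments pair_idx {n}.
Arguments cutb {n}.
Arguments cutb2 {n}.
Arguments yv {n}.
Arguments bvec {n}.
Arguments bvec_eq {n}.
Arguments cutaff {R n}.
Arguments cutaff_ext {R n}.
Arguments cutaff_const {R n}.
Arguments cutaff_add {R n}.
Arguments cutaff_scale {R n}.
Arguments cutaff_atom {R n}.
Arguments cutaff_sum {R n}.
Arguments cutaff_g {R n}.


Section Tri.
Variables (R : realType) (n : nat) (i0 : 'I_n).

Definition Vc : {set {ffun 'I_('C(n, 2)) -> bool}} := [set bvec X | X : {set 'I_n}].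

Definition okm (S X : {set 'I_n}) i j k :=
  (yv X i j == yv S i j) && (yv X i k == yv S i k).

Definition badf (S1 S2 S3 X : {set 'I_n}) i j k :=
  ~~ [|| okm S1 X i j k, okm S2 X i j k | okm S3 X i j k].

Definition Fsum S1 S2 S3 X : R :=
  \sum_i \sum_j \sum_k ((badf S1 S2 S3 X i j k)%:R : R).

Lemma okm_ok3 S X i j k :
  okm S X i j k = ok3 ((i \in X) (+) (i \in S)) ((j \in X) (+) (j \in S))
                      ((k \in X) (+) (k \in S)).
Proof.
rewrite /okm /ok3 /yv.
by case: (i \in X); case: (i \in S); case: (j \in X); case: (j \in S);
   case: (k \in X); case: (k \in S).
Qed.

Lemma const_bvec (S X : {set 'I_n}) :
  (forall p, (p \in X) (+) (p \in S) = (i0 \in X) (+) (i0 \in S)) ->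
  bvec X = bvec S.
Proof.
move=> h; apply: bvec_eq => i j; move: (h i) (h j); rewrite /yv.
by case: (i \in X); case: (i \in S); case: (j \in X); case: (j \in S);
   case: (i0 \in X); case: (i0 \in S).
Qed.

Lemma sum3_eq0 (F : 'I_n -> 'I_n -> 'I_n -> R) :
  (forall i j k, 0 <= F i j k) -> \sum_i \sum_j \sum_k F i j k = 0 ->
  forall i j k, F i j k = 0.
Proof.
move=> h0 hs i j k.
have h1 : \sum_j \sum_k F i j k = 0.
  apply: (psumr_eq0P _ hs) => // i' _.
  by apply: sumr_ge0 => j' _; apply: sumr_ge0 => k' _.
have h2 : \sum_k F i j k = 0.
  apply: (psumr_eq0P _ h1) => // j' _.
  by apply: sumr_ge0 => k' _.
by apply: (psumr_eq0P _ h2).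
Qed.

Lemma tri_face u v w : u \in Vc -> v \in Vc -> w \in Vc ->
  is_face (poly01 R Vc) (conv [:: pt01 R u; pt01 R v; pt01 R w]).
Proof.
move=> /imsetP [S1 _ ->] /imsetP [S2 _ ->] /imsetP [S3 _ ->].
have hc : cutaff (fun X => (-1) * Fsum S1 S2 S3 X).
  apply: cutaff_scale; apply: cutaff_sum => i; apply: cutaff_sum => j.
  apply: cutaff_sum => k.
  exact: (cutaff_g (fun z w => ~~ [|| (z == yv S1 i j) && (w == yv S1 i k),
     (z == yv S2 i j) && (w == yv S2 i k) | (z == yv S3 i j) && (w == yv S3 i k)]) i j k).
have [c [b hcb]] := hc.
have hdot : forall X, dotp c (pt01 R (bvec X)) = - Fsum S1 S2 S3 X - b.
  by move=> X; rewrite -mulN1r hcb addrK.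
have Fge0 : forall X, 0 <= Fsum S1 S2 S3 X.
  by move=> X; do 3! (apply: sumr_ge0 => ? _); apply: ler0n.
have Fm : forall X, X \in [:: S1; S2; S3] -> Fsum S1 S2 S3 X = 0.
  move=> X hX; rewrite /Fsum; do 3! (apply: big1 => ? _).
  rewrite /badf; move: hX; rewrite !inE => /or3P [] /eqP ->;
  by rewrite /okm !eqxx ?orbT.
have Ftight : forall X, Fsum S1 S2 S3 X = 0 ->
    bvec X \in [:: bvec S1; bvec S2; bvec S3].
  move=> X hF.
  have H : forall i j k, [|| okm S1 X i j k, okm S2 X i j k | okm S3 X i j k].
    move=> i j k.
    have h3 := sum3_eq0 _ (fun i j k => ler0n _ _) hF i j k.
    move: h3; rewrite /badf; case: [|| _, _ | _] => //= /eqP.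
    by rewrite oner_eq0.
  have := core_fun _ i0 (fun p => (p \in X) (+) (p \in S1))
    (fun p => (p \in X) (+) (p \in S2))
    (fun p => (p \in X) (+) (p \in S3)).
  case.
    by move=> i j k; rewrite -!okm_ok3; exact: H.
  - by move=> /const_bvec ->; rewrite !inE eqxx.
  - by move=> /const_bvec ->; rewrite !inE eqxx ?orbT.
  - by move=> /const_bvec ->; rewrite !inE eqxx ?orbT.
apply: (@face_seq R _ _ _ c (- b)).
- move=> s /mapP [x]; rewrite mem_enum => /imsetP [X _ ->] ->.
  by rewrite hdot lerBlDr addrC subrr oppr_le0.
- move=> s /mapP [x]; rewrite mem_enum => /imsetP [X _ ->] -> /eqP.
  rewrite hdot -subr_eq0 opprK addrNK oppr_eq0 => /eqP /Ftight.
  rewrite !inE => /or3P [] /eqP ->; by rewrite eqxx ?orbT.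
- move=> t; rewrite !inE => /or3P [] /eqP -> ; apply: map_f; rewrite mem_enum;
  apply/imsetP; [exists S1|exists S2|exists S3] => //.
- move=> t; rewrite !inE => /or3P [] /eqP ->; rewrite hdot Fm ?oppr0 ?sub0r //;
  by rewrite !inE eqxx ?orbT.
Qed.

End Tri.


Lemma set2_eq (T : finType) (p q i j : T) : p != q ->
  ([set p; q] == [set i; j]) = ((p == i) && (q == j)) || ((p == j) && (q == i)).
Proof.
move=> hpq; apply/eqP/idP.
  move=> h; have := set21 p q; have := set22 p q; rewrite h !inE.
  move=> /orP[]/eqP hq /orP[]/eqP hp; subst; rewrite ?eqxx ?orbT //;
  by rewrite eqxx in hpq.
case/orP=> /andP[/eqP-> /eqP->] //.
by apply/setP => x; rewrite !inE orbC.
Qed.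

Lemma key4 (R : realType) (a b c e : bool) :
  ~~ (a && b) -> ~~ (c && e) -> ~~ (a && c) -> ~~ (b && e) ->
  (((a && e) || (c && b))%:R : R) =
    2^-1 * ((a (+) b)%:R + (c (+) e)%:R - ((a || c) (+) (b || e))%:R).
Proof. by case: a; case: b; case: c; case: e => //= *; field. Qed.

Section Dim.
Variables (R : realType) (n : nat).

Lemma bvec0 : pt01 R (bvec (set0 : {set 'I_n})) = 0.
Proof.
apply/rowP => k; rewrite !mxE ffunE /cutb.
have -> : [exists p in eidx k, p \in (set0 : {set 'I_n})] = false.
  by apply/negbTE/existsPn => p; rewrite inE andbF.
by [].
Qed.

Lemma oppmx_sub {m1 m2} {A : 'M[R]_(m1, 'C(n, 2))} {B : 'M[R]_(m2, 'C(n, 2))} :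
  (A <= B)%MS -> (- A <= B)%MS.
Proof. by move=> h; have := scalemx_sub (-1) h; rewrite scaleN1r. Qed.

Lemma affdim_Vc : aff_dim (pts01 R (Vc n)) = 'C(n, 2).
Proof.
rewrite /aff_dim.
set S := pts01 R (Vc n).
set M := \matrix_(i < size S) (S`_i - S`_0).
have hrow : forall s, s \in S -> (s - S`_0 <= M)%MS.
  move=> s hs; have hi : (index s S < size S)%N by rewrite index_mem.
  by have := row_sub (Ordinal hi) M; rewrite rowK /= nth_index.
have hin : forall X, pt01 R (bvec X) \in S.
  move=> X; apply: map_f; rewrite mem_enum; apply/imsetP; by exists X.
have hS0 : (S`_0 <= M)%MS.
  have := oppmx_sub (hrow _ (hin set0)); by rewrite bvec0 sub0r opprK.
have hP : forall X, (pt01 R (bvec X) <= M)%MS.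
  by move=> X; have := addmx_sub (hrow _ (hin X)) hS0; rewrite subrK.
have hdelta : forall k : 'I_('C(n, 2)), ((delta_mx 0 k : 'rV[R]_('C(n, 2))) <= M)%MS.
  move=> k; have [i [j [hij hk]]] := eidx_pair k.
  have -> : delta_mx 0 k = 2^-1 *: (pt01 R (bvec [set i]) + pt01 R (bvec [set j])
                          - pt01 R (bvec [set i; j])).
    apply/rowP => k'; rewrite !mxE !ffunE.
    have [p [q [hpq hk']]] := eidx_pair k'.
    rewrite hk' !cutb2 /yv -(inj_eq eidx_inj) hk hk' set2_eq // !inE.
    apply: key4; apply/negP => /andP [/eqP h1 /eqP h2].
    - by move: hpq; rewrite h1 h2 eqxx.
    - by move: hpq; rewrite h1 h2 eqxx.
    - by move: hij; rewrite -h1 -h2 eqxx.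
    - by move: hij; rewrite -h1 -h2 eqxx.
  apply: scalemx_sub; apply: addmx_sub; first exact: addmx_sub.
  exact: oppmx_sub.
apply/eqP; rewrite eqn_leq rank_leq_col /=.
rewrite -{1}(mxrank1 R 'C(n, 2)); apply: mxrankS.
by apply/row_subP => k; rewrite row1.
Qed.

End Dim.


Lemma card_Vc n (i0 : 'I_n) : (2 ^ n.-1 <= #|Vc n|)%N.
Proof.
have sub : [set bvec X | X in powerset [set~ i0]] \subset Vc n.
  by apply/subsetP => x /imsetP [X _ ->]; apply/imsetP; exists X.
apply: (leq_trans _ (subset_leq_card sub)).
rewrite card_in_imset ?card_powerset ?cardsC1 ?card_ord //.
move=> X Y; rewrite !powersetE => hX hY hXY; apply/setP => p.
have nX : i0 \notin X by apply/negP => /(subsetP hX); rewrite !inE eqxx.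
have nY : i0 \notin Y by apply/negP => /(subsetP hY); rewrite !inE eqxx.
case: (eqVneq p i0) => [->|hp]; first by rewrite (negbTE nX) (negbTE nY).
have hp' : i0 != p by rewrite eq_sym.
have [k hk] := pair_idx i0 p hp'.
have := congr1 (fun f : {ffun _ -> bool} => f k) hXY; rewrite /= !ffunE hk !cutb2 /yv.
by rewrite (negbTE nX) (negbTE nY).
Qed.

Lemma bin2_2 m : ('C(m, 2) * 2 = m * m.-1)%N.
Proof.
elim: m => // m IH; rewrite binS bin1 mulnDl IH.
by case: m IH => //= m _; nia.
Qed.

Lemma real_ineq (R : realType) m :
  (2 : R) `^ (Num.sqrt (2 * ('C(m.+1, 2))%:R) - 2^-1) < ((2 ^ m)%:R : R).
Proof.
have hC : (2 * ('C(m.+1, 2))%:R : R) = m.+1%:R * m%:R.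
  have := bin2_2 m.+1; rewrite /= => h.
  by apply/eqP; rewrite -!natrM eqr_nat; apply/eqP; lia.
rewrite hC.
set M : R := m%:R.
have hM : 0 <= M by rewrite /M ler0n.
have hsq : Num.sqrt (m.+1%:R * M) < M + 2^-1.
  have h1 : 0 < M + 2^-1 by lra.
  rewrite -[X in _ < X](@ger0_norm _ (M + 2^-1)) ?ltW // -sqrtr_sqr.
  rewrite ltr_sqrt; last by rewrite exprn_gt0.
  rewrite -natr1 -/M; nra.
have h2 : (2 : R) != 0 by rewrite pnatr_eq0.
rewrite natrX -powR_mulrn ?ler0n // /powR (negbTE h2) ltr_expR ltr_pM2r.
  rewrite -/M; lra.
by apply: ln_gt0; lra.
Qed.

Theorem mainTheorem14 (R : realType) (n d : nat) (hn : (3 <= n)%N)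
    (hd : d = 'C(n, 2)) :
  exists V : {set {ffun 'I_d -> bool}},
    (* conv V is d-dimensional *)
    (0 < #|V|)%N /\ aff_dim (pts01 R V) = d /\
    (* every point of V is a vertex of conv V (so V is its vertex set) *)
    (forall v, v \in V -> is_vertex (poly01 R V) (pt01 R v)) /\
    (* 3-neighborly: any three distinct vertices span a (triangular) face *)
    (forall u v w, u \in V -> v \in V -> w \in V ->
       u != v -> u != w -> v != w ->
       is_face (poly01 R V) (conv [:: pt01 R u; pt01 R v; pt01 R w])) /\
    (* more than 2^(sqrt(2d) - 1/2) vertices *)
    (2 : R) `^ (Num.sqrt (2 * d%:R) - 2^-1) < (#|V|)%:R.
Proof.
subst d.
case: n hn => [//|m] hm.
have hcard := card_Vc m.+1 ord0.
exists (Vc m.+1); split.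
  by rewrite (leq_trans _ hcard) // expn_gt0.
split; first exact: affdim_Vc.
split; first by move=> v hv; apply: vertex01.
split; first by move=> u v w hu hv hw _ _ _; exact: (@tri_face R m.+1 ord0 u v w hu hv hw).
apply: (lt_le_trans (real_ineq R m)); rewrite ler_nat; exact: hcard.
Qed.
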